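(* Fix $\eta>0$ and assume $d\ge2$. There exists a minimizer $\lambda^*$ of $L$ such that $$4L(0)-4L(\lambda^* )+16m^2\eta\|\lambda^*\|_2^2\le G(\eta)^2,\qquad G(\eta):=24md(m+n)\Big(\sqrt\eta\,\|C\|_\infty+\frac{\log d}{\sqrt\eta}\Big).$$
   Context: Let $G=(V,E)$ be a finite undirected graph with $n=|V|$, $m=|E|$, every vertex incident to at least one edge; $N_i=\{e\in E:i\in e\}$. $\chi$ is a finite label set with $d=|\chi|\ge2$. Costs $C_i\in\mathbb{R}^\chi$, $C_e\in\mathbb{R}^{\chi^2}$; $\|C\|_\infty$ is the largest absolute entry; for $e=\{i,j\}$, $x_e=(x_i,x_j)$, $(x_e)_i=x_i$. Dual variables $\lambda=(\lambda_{e,i}(x))_{e\in E,i\in e,x\in\chi}\in\mathbb{R}^{2md}$ and $$L(\lambda)=\frac1\eta\sum_{i\in V}\log\sum_{x\in\chi}\exp\Big(-\eta C_i(x)+\eta\sum_{e\in N_i}\lambda_{e,i}(x)\Big)+\frac1\eta\sum_{e\in E}\log\sum_{x_e\in\chi^2}\exp\Big(-\eta C_e(x_e)-\eta\sum_{i\in e}\lambda_{e,i}((x_e)_i)\Big).$$ *)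

(* Defs.v *)
From HB Require Import structures.
From mathcomp Require Import all_boot all_order all_algebra.
From mathcomp Require Import all_classical all_reals all_analysis.
Set Implicit Arguments. Unset Strict Implicit. Unset Printing Implicit Defensive.
Import Order.TTheory GRing.Theory Num.Theory.
Local Open Scope ring_scope.

(* Graph: vertex type V, edge type E; each edge e has two endpoints
   [ep e false] and [ep e true] (an orientation fixing x_e = (x_i, x_j)). *)
Section Defs.
Variables (R : realType) (V E X : finType) (ep : E -> bool -> V).

Definition simple_graph : Prop :=
  (forall e, ep e false != ep e true) /\
  (forall e e', [set ep e false; ep e true] = [set ep e' false; ep e' true] -> e = e').

Definition no_isolated : Prop := forall i : V, exists e b, ep e b = i.

(* dual variables lambda_{e, ep e b}(x) *)
Definition dualv := E -> bool -> X -> R.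

Definition zero_dual : dualv := fun _ _ _ => 0.

Definition sqnorm2 (lam : dualv) : R :=
  \sum_(e : E) \sum_(b : bool) \sum_(x : X) lam e b x ^+ 2.

Definition Cnorm_inf (Cv : V -> X -> R) (Ce : E -> X -> X -> R) : R :=
  Num.max (\big[Num.max/0]_(i : V) \big[Num.max/0]_(x : X) `|Cv i x|)
          (\big[Num.max/0]_(e : E) \big[Num.max/0]_(x : X) \big[Num.max/0]_(y : X) `|Ce e x y|).

Definition Ldual (eta : R) (Cv : V -> X -> R) (Ce : E -> X -> X -> R) (lam : dualv) : R :=
  eta^-1 * \sum_(i : V) ln (\sum_(x : X)
      expR (- eta * Cv i x + eta * \sum_(e : E) \sum_(b : bool | ep e b == i) lam e b x))
  + eta^-1 * \sum_(e : E) ln (\sum_(x : X) \sum_(y : X)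
      expR (- eta * Ce e x y - eta * (lam e false x + lam e true y))).

End Defs.

(* Main.v *)
Require Import Defs.
From HB Require Import structures.
From mathcomp Require Import all_boot all_order all_algebra.
From mathcomp Require Import all_classical all_reals all_analysis.
From mathcomp Require Import ring lra zify.
Import Order.TTheory GRing.Theory Num.Theory.
Local Open Scope ring_scope.


Lemma term_le_sum (R : numDomainType) (I : finType) (F : I -> R) j :
  (forall i, 0 <= F i) -> F j <= \sum_i F i.
Proof. by move=> F0; rewrite (bigD1 j) //= lerDl sumr_ge0. Qed.

Lemma sum_expR_gt0 (R : realType) (I : finType) (f : I -> R) (j : I) :
  0 < \sum_i expR (f i).
Proof.
apply: (lt_le_trans (expR_gt0 (f j))).

exact: (@term_le_sum _ _ (fun i => expR (f i)) j (fun i => expR_ge0 (f i))).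
Qed.

Lemma lse_ge (R : realType) (I : finType) (f : I -> R) j :
  f j <= ln (\sum_i expR (f i)).
Proof.
rewrite -{1}(expRK (f j)) ler_ln ?posrE ?expR_gt0 ?(@sum_expR_gt0 _ _ _ j) //.
exact: (@term_le_sum _ _ (fun i => expR (f i)) j (fun i => expR_ge0 (f i))).
Qed.

Lemma lse_le (R : realType) (I : finType) (f : I -> R) (a : R) (j : I) :
  (forall i, f i <= a) -> ln (\sum_i expR (f i)) <= ln (#|I|%:R) + a.
Proof.
move=> fa.
have cpos : (0 < #|I|%:R :> R) by rewrite ltr0n; apply/card_gt0P; exists j.
rewrite -[X in _ + X](expRK a) -lnM ?posrE ?expR_gt0 //.
rewrite ler_ln ?posrE ?mulr_gt0 ?expR_gt0 ?(@sum_expR_gt0 _ _ _ j) //.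
apply: (le_trans (y := \sum_(i : I) expR a)).
  by apply: ler_sum => i _; rewrite ler_expR.
by rewrite sumr_const mulr_natl.
Qed.

Lemma lse_shift (R : realType) (I : finType) (f : I -> R) (k : R) (j : I) :
  ln (\sum_i expR (f i + k)) = ln (\sum_i expR (f i)) + k.
Proof.
under eq_bigr do rewrite expRD.
rewrite -mulr_suml lnM ?posrE ?expR_gt0 ?(@sum_expR_gt0 _ _ _ j) // expRK //.
Qed.

Lemma sum_vert (R : nmodType) (V E : finType) (ep : E -> bool -> V)
  (F : E -> bool -> R) :
  \sum_(i : V) \sum_(e : E) \sum_(b : bool | ep e b == i) F e b
  = \sum_(e : E) \sum_(b : bool) F e b.
Proof.
under eq_bigr do under eq_bigr do rewrite big_mkcond.
rewrite exchange_big; apply: eq_bigr => e _.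
rewrite exchange_big; apply: eq_bigr => b _.
rewrite -big_mkcond /= (big_pred1 (ep e b)) // => i /=; by rewrite eq_sym.
Qed.
Arguments sum_vert {R V E} ep F.

Lemma Cv_le (R : realType) (V E X : finType) (Cv : V -> X -> R)
  (Ce : E -> X -> X -> R) i x : `|Cv i x| <= Cnorm_inf Cv Ce.
Proof.
rewrite /Cnorm_inf le_max; apply/orP; left.
apply: le_trans (le_bigmax 0 (fun i => \big[Num.max/0]_(x : X) `|Cv i x|) i).
exact: (le_bigmax 0 (fun x => `|Cv i x|) x).
Qed.

Arguments Cv_le {R V E X} Cv Ce i x.

Lemma Ce_le (R : realType) (V E X : finType) (Cv : V -> X -> R)
  (Ce : E -> X -> X -> R) e x y : `|Ce e x y| <= Cnorm_inf Cv Ce.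
Proof.
rewrite /Cnorm_inf le_max; apply/orP; right.
apply: le_trans (le_bigmax 0 (fun e => \big[Num.max/0]_(x : X)
   \big[Num.max/0]_(y : X) `|Ce e x y|) e).
apply: le_trans (le_bigmax 0 (fun x => \big[Num.max/0]_(y : X) `|Ce e x y|) x).
exact: (le_bigmax 0 (fun y => `|Ce e x y|) y).
Qed.

Arguments Ce_le {R V E X} Cv Ce e x y.

Lemma Cnorm_ge0 (R : realType) (V E X : finType) (Cv : V -> X -> R)
  (Ce : E -> X -> X -> R) : 0 <= Cnorm_inf Cv Ce.
Proof.
rewrite /Cnorm_inf le_max; apply/orP; left.
apply: (big_ind (fun v : R => 0 <= v)) => // [a b ha hb|i _]; first by rewrite le_max ha.
apply: (big_ind (fun v : R => 0 <= v)) => // a b ha hb; by rewrite le_max ha.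
Qed.

Lemma Ldual_shift (R : realType) (V E X : finType) (ep : E -> bool -> V)
  (Cv : V -> X -> R) (Ce : E -> X -> X -> R) (eta : R) (x0 : X)
  (lam : dualv R E X) (k : E -> bool -> R) : 0 < eta ->
  Ldual ep eta Cv Ce (fun e b x => lam e b x - k e b) = Ldual ep eta Cv Ce lam.
Proof.
move=> eta0; rewrite /Ldual.
set K := fun i => \sum_(e : E) \sum_(b : bool | ep e b == i) k e b.
have hv : forall i,
  ln (\sum_x expR (- eta * Cv i x + eta * \sum_(e : E) \sum_(b : bool | ep e b == i) (lam e b x - k e b)))
  = ln (\sum_x expR (- eta * Cv i x + eta * \sum_(e : E) \sum_(b : bool | ep e b == i) lam e b x)) + (- eta * K i).
  move=> i; rewrite -(@lse_shift _ _ _ _ x0); congr (ln _); apply: eq_bigr => x _; congr (expR _).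
  rewrite /K; under eq_bigr do rewrite sumrB; rewrite sumrB; ring.
have he : forall e,
  ln (\sum_x \sum_y expR (- eta * Ce e x y - eta * ((lam e false x - k e false) + (lam e true y - k e true))))
  = ln (\sum_x \sum_y expR (- eta * Ce e x y - eta * (lam e false x + lam e true y))) + eta * (k e false + k e true).
  move=> e; rewrite !pair_bigA /= -(@lse_shift _ _ _ _ (x0, x0)); congr (ln _); apply: eq_bigr => p _; congr (expR _).
  ring.
under eq_bigr do rewrite hv.
under [X in _ + _ * X = _]eq_bigr do rewrite he.
rewrite !big_split /= !mulrDr -!mulr_sumr.
have -> : \sum_(e : E) (k e false + k e true) = \sum_i K i.
  by rewrite /K sum_vert; apply: eq_bigr => e _; rewrite big_bool addrC.
rewrite !mulrA !mulrN !mulNr mulVf ?gt_eqF // !mul1r; ring.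
Qed.
Arguments Ldual_shift {R V E X} ep Cv Ce eta x0 lam k _.

Lemma Ldual_lb (R : realType) (V E X : finType) (ep : E -> bool -> V)
  (Cv : V -> X -> R) (Ce : E -> X -> X -> R) (eta : R)
  (lam : dualv R E X) (phi : V -> X) : 0 < eta ->
  (forall e b, exists x, lam e b x = 0) ->
  \sum_(i : V) \sum_(e : E) \sum_(b : bool | ep e b == i) lam e b (phi i)
    - (#|V|%:R + #|E|%:R) * Cnorm_inf Cv Ce <= Ldual ep eta Cv Ce lam.
Proof.
move=> eta0 z; set c := Cnorm_inf Cv Ce.
have -> : \sum_(i : V) \sum_(e : E) \sum_(b : bool | ep e b == i) lam e b (phi i)
    - (#|V|%:R + #|E|%:R) * c =
   \sum_(i : V) (\sum_(e : E) \sum_(b : bool | ep e b == i) lam e b (phi i) - c)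
   + \sum_(e : E) (- c).
  by rewrite sumrB !sumr_const mulNrn -[c *+ #|V|]mulr_natl -[c *+ #|E|]mulr_natl; ring.
rewrite /Ldual !mulr_sumr.
have ei : 0 <= eta^-1 by rewrite invr_ge0 ltW.
apply: lerD; [apply: ler_sum => i _|apply: ler_sum => e _].
  apply: le_trans (ler_wpM2l ei (@lse_ge _ _ _ (phi i))).
  rewrite mulrDr mulrA mulrN mulVf ?gt_eqF // mulrA mulVf ?gt_eqF // !mulN1r !mul1r.
  rewrite addrC lerD2r.
  rewrite lerN2; have := Cv_le Cv Ce i (phi i); rewrite ler_norml => /andP[_ ->] //.
have [xe hx] := z e false; have [ye hy] := z e true.
rewrite pair_bigA /=.
apply: le_trans (ler_wpM2l ei (@lse_ge _ _ _ (xe, ye))) => /=.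
rewrite hx hy addr0 mulr0 subr0 mulrA mulrN mulVf ?gt_eqF // mulN1r lerN2.
have := Ce_le Cv Ce e xe ye; rewrite ler_norml => /andP[_ ->] //.
Qed.
Arguments Ldual_lb {R V E X} ep Cv Ce eta lam phi _ _.

Lemma Ldual_ub0 (R : realType) (V E X : finType) (ep : E -> bool -> V)
  (Cv : V -> X -> R) (Ce : E -> X -> X -> R) (eta : R) (x0 : X) : 0 < eta ->
  Ldual ep eta Cv Ce (@zero_dual R E X) <=
   #|V|%:R * (Cnorm_inf Cv Ce + ln (#|X|%:R) / eta)
   + #|E|%:R * (Cnorm_inf Cv Ce + 2 * ln (#|X|%:R) / eta).
Proof.
move=> eta0.
have -> : #|V|%:R * (Cnorm_inf Cv Ce + ln (#|X|%:R) / eta)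
   + #|E|%:R * (Cnorm_inf Cv Ce + 2 * ln (#|X|%:R) / eta) =
   \sum_(i : V) (Cnorm_inf Cv Ce + ln (#|X|%:R) / eta)
   + \sum_(e : E) (Cnorm_inf Cv Ce + 2 * ln (#|X|%:R) / eta).
  by rewrite !sumr_const !mulr_natl.
rewrite /Ldual !mulr_sumr.
have ei : 0 <= eta^-1 by rewrite invr_ge0 ltW.
have dpos : (0 < #|X|%:R :> R) by rewrite ltr0n; apply/card_gt0P; exists x0.
apply: lerD; [apply: ler_sum => i _|apply: ler_sum => e _].
  have hx : forall x, - eta * Cv i x + eta * \sum_(e : E) \sum_(b : bool | ep e b == i)
      @zero_dual R E X e b x <= eta * Cnorm_inf Cv Ce.
    move=> x; rewrite /zero_dual big1 ?mulr0 ?addr0; last first.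
      by move=> e _; rewrite big1.
    rewrite mulNr -mulrN ler_pM2l // lerNl.
    by have := Cv_le Cv Ce i x; rewrite ler_norml => /andP[? ?].
  apply: le_trans (ler_wpM2l ei (@lse_le _ _ _ (eta * Cnorm_inf Cv Ce) x0 hx)) _.
  rewrite mulrDr mulrA mulVf ?gt_eqF // mul1r addrC mulrC.
  by rewrite lerD2l.
rewrite pair_bigA /=.
have hx : forall p : X * X, - eta * Ce e p.1 p.2 - eta * (@zero_dual R E X e false p.1
   + @zero_dual R E X e true p.2) <= eta * Cnorm_inf Cv Ce.
  move=> [x y] /=; rewrite /zero_dual addr0 mulr0 subr0.
  rewrite mulNr -mulrN ler_pM2l // lerNl.
  by have := Ce_le Cv Ce e x y; rewrite ler_norml => /andP[? ?].
apply: le_trans (ler_wpM2l ei (@lse_le _ _ _ (eta * Cnorm_inf Cv Ce) (x0, x0) hx)) _.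
rewrite card_prod natrM lnM ?posrE // mulrDr mulrA mulVf ?gt_eqF // mul1r addrC.
have -> : 2 * ln (#|X|%:R : R) / eta = eta^-1 * (ln (#|X|%:R : R) + ln (#|X|%:R : R)) by ring.
by [].
Qed.
Arguments Ldual_ub0 {R V E X} ep Cv Ce eta x0 _.

Lemma core (R : realType) (V E X : finType) (ep : E -> bool -> V)
  (Cv : V -> X -> R) (Ce : E -> X -> X -> R) (eta : R) (x0 : X)
  (lam : dualv R E X) : 0 < eta ->
  (forall e b x, 0 <= lam e b x) -> (forall e b, exists x, lam e b x = 0) ->
  Ldual ep eta Cv Ce lam <= Ldual ep eta Cv Ce (@zero_dual R E X) ->
  let M := 2 * (#|V|%:R + #|E|%:R) * Cnorm_inf Cv Ce
           + (#|V|%:R + 2 * #|E|%:R) * (ln (#|X|%:R) / eta) in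
  [/\ (forall e b x, lam e b x <= M), sqnorm2 lam <= #|X|%:R * M ^+ 2
    & Ldual ep eta Cv Ce (@zero_dual R E X) - Ldual ep eta Cv Ce lam <= M].
Proof.
move=> eta0 lam0 z hL M.
set c := Cnorm_inf Cv Ce.
set ub := #|V|%:R * (c + ln (#|X|%:R) / eta) + #|E|%:R * (c + 2 * ln (#|X|%:R) / eta).
have hub : Ldual ep eta Cv Ce (@zero_dual R E X) <= ub := Ldual_ub0 ep Cv Ce eta x0 eta0.
have hM : ub + (#|V|%:R + #|E|%:R) * c = M by rewrite /ub /M /c; ring.
have key : forall phi : V -> X,
    \sum_(i : V) \sum_(e : E) \sum_(b : bool | ep e b == i) lam e b (phi i) <= M.
  move=> phi; have h := Ldual_lb ep Cv Ce eta lam phi eta0 z.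
  rewrite -hM -lerBlDr; apply: le_trans h _; exact: le_trans hL hub.
have Sge0 : forall phi : V -> X,
    0 <= \sum_(i : V) \sum_(e : E) \sum_(b : bool | ep e b == i) lam e b (phi i).
  by move=> phi; apply: sumr_ge0 => i _; apply: sumr_ge0 => e _; apply: sumr_ge0.
have hsum : forall x, \sum_(e : E) \sum_(b : bool) lam e b x <= M.
  move=> x; rewrite -(sum_vert ep (fun e b => lam e b x)).
  exact: (key (fun _ => x)).
have hle : forall e b x, lam e b x <= M.
  move=> e b x; apply: le_trans (hsum x).
  apply: le_trans (@term_le_sum _ _ (fun b' => lam e b' x) b (fun b' => lam0 e b' x)) _.
  apply: (@term_le_sum _ _ (fun e' => \sum_(b' : bool) lam e' b' x) e).
  by move=> e'; apply: sumr_ge0.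
split => //.
- rewrite /sqnorm2.
  apply: (@le_trans _ _ (\sum_(e : E) \sum_(b : bool) \sum_(x : X) M * lam e b x)).
    apply: ler_sum => e _; apply: ler_sum => b _; apply: ler_sum => x _.
    by rewrite expr2 ler_wpM2r.
  under eq_bigr do under eq_bigr do rewrite -mulr_sumr.
  under eq_bigr do rewrite -mulr_sumr.
  rewrite -mulr_sumr.
  under eq_bigr do rewrite exchange_big.
  rewrite exchange_big /=.
  have M0 : 0 <= M by apply: le_trans (key (fun _ => x0)); exact: Sge0.
  apply: le_trans (ler_wpM2l M0 (ler_sum _ (fun x _ => hsum x))) _.
  rewrite sumr_const -[M *+ _]mulr_natr mulrA mulrC -expr2; exact: lexx.
- have h := Ldual_lb ep Cv Ce eta lam (fun _ => x0) eta0 z.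
  rewrite -hM lerBlDl; apply: le_trans hub _.
  rewrite -lerBlDr addrC; apply: le_trans h.
  have := Sge0 (fun _ => x0); rewrite /c /=; lra.
Qed.


Lemma nat_fact (n m : nat) : (n <= 2 * m)%N -> (n + m <= m ^ 2 * (n + m) ^ 2)%N.
Proof.
move=> h; case: m h => [|m] h; first by have -> : n = 0%N by lia.
nia.
Qed.

Lemma ln2_ge (R : realType) (d : nat) : (2 <= d)%N -> 1 / 2 <= ln (d%:R : R).
Proof.
move=> d2.
have h : expR (1 / 2 : R) < 2.
  have h1 := @expR_gt1Dx R (- (1 / 2)) _.
  have ne : (- (1 / 2) : R) != 0 by rewrite oppr_eq0; apply/negP => /eqP; lra.
  have {h1} h1 := h1 ne.
  rewrite expRN in h1.
  have p := expR_gt0 (1 / 2 : R).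
  rewrite -(ltr_pM2r p) mulVf ?gt_eqF // in h1.
  lra.
have dp : (0 < d%:R :> R) by rewrite ltr0n; lia.
rewrite -(expRK (1 / 2)) ler_ln ?posrE ?expR_gt0 //.
apply: le_trans (ltW h) _; rewrite (ler_nat R 2 d); exact: d2.
Qed.

Lemma final_arith (R : realType) (n m d : nat) (c eta A S : R) :
  (n <= 2 * m)%N -> (2 <= d)%N -> 0 <= c -> 0 < eta ->
  A <= 2 * (n%:R + m%:R) * c + (n%:R + 2 * m%:R) * (ln (d%:R) / eta) ->
  S <= d%:R * (2 * (n%:R + m%:R) * c + (n%:R + 2 * m%:R) * (ln (d%:R) / eta)) ^+ 2 ->
  4 * A + 16 * (m%:R) ^+ 2 * eta * S <=
  (24 * m%:R * d%:R * (m + n)%:R * (Num.sqrt eta * c + ln (d%:R) / Num.sqrt eta)) ^+ 2.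
Proof.
move=> nm d2 c0 eta0 hA hS.
set L2 := ln (d%:R : R).
set M := 2 * (n%:R + m%:R) * c + (n%:R + 2 * m%:R) * (L2 / eta).
have L2h : 1 / 2 <= L2 := @ln2_ge R d d2.
set t := Num.sqrt eta.
have t0 : 0 < t by rewrite sqrtr_gt0.
have tt : t ^+ 2 = eta by rewrite sqr_sqrtr // ltW.
set u := L2 / eta.
have u0 : 0 <= u by rewrite divr_ge0 // ?ltW //; lra.
have etau : eta * u = L2 by rewrite /u mulrC -mulrA mulVf ?gt_eqF // mulr1.
set P := c + u.
set N := n%:R + m%:R : R.
set mm := m%:R : R.
set dd := d%:R : R.
have N0 : 0 <= N by rewrite /N addr_ge0.
have mm0 : 0 <= mm by [].
have dd2 : 2 <= dd by rewrite /dd (ler_nat R 2 d).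
have hG : 24 * m%:R * d%:R * (m + n)%:R * (t * c + L2 / t) = 24 * mm * dd * N * (t * P).
  rewrite /N /mm /dd /P natrD [m%:R + _]addrC; congr (_ * _).
  rewrite mulrDr; congr (_ + _); rewrite /u -tt.
  by field; rewrite gt_eqF.
rewrite hG.
have hM : M <= 2 * N * P.
  rewrite /M -/u -/N /P [2 * N * (c + u)]mulrDr lerD2l ler_wpM2r //.
  have : (0 : R) <= n%:R by [].
  rewrite /N; lra.
have M0 : 0 <= M.
  rewrite /M -/u -/N; have := ler0n R n; have := ler0n R m; nra.
have P0 : 0 <= P by rewrite /P addr_ge0.
have h2P : 1 <= 2 * eta * P.
  have : eta * c >= 0 by rewrite mulr_ge0 // ltW.
  rewrite /P mulrDr in etau *; lra.
have natf : N <= mm ^+ 2 * N ^+ 2.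
  have := @nat_fact n m nm; rewrite -(ler_nat R) natrM !natrX natrD.
  by rewrite /N /mm addrC.
have step1 : 4 * A + 16 * mm ^+ 2 * eta * S <= 4 * M + 16 * mm ^+ 2 * eta * (dd * M ^+ 2).
  apply: lerD; first by rewrite ler_wpM2l.
  rewrite ler_wpM2l // mulr_ge0 // ?mulr_ge0 // ?exprn_ge0 // ltW //.
apply: le_trans step1 _.
have hM2 : M ^+ 2 <= 4 * N ^+ 2 * P ^+ 2.
  have : M ^+ 2 <= (2 * N * P) ^+ 2 by rewrite ler_pXn2r // ?nnegrE // ?mulr_ge0.
  by rewrite !exprMn; lra.
have e1 : 4 * M <= 16 * N * (eta * P ^+ 2).
  have : 4 * M <= 8 * N * P by nra.
  move=> h; apply: le_trans h _.
  have : 0 <= N * P by rewrite mulr_ge0.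
  nra.
have e2 : 16 * mm ^+ 2 * eta * (dd * M ^+ 2) <= 64 * mm ^+ 2 * dd * N ^+ 2 * (eta * P ^+ 2).
  have : 0 <= 16 * mm ^+ 2 * eta * dd by rewrite !mulr_ge0 // ?exprn_ge0 // ?ltW // (le_trans _ dd2).
  nra.
rewrite !exprMn tt.
apply: le_trans (lerD e1 e2) _.
set Q := eta * P ^+ 2.
have Q0 : 0 <= Q by apply: mulr_ge0; [exact: ltW | exact: exprn_ge0].
set W := mm ^+ 2 * N ^+ 2 * Q.
have W0 : 0 <= W by apply: mulr_ge0 => //; apply: mulr_ge0; exact: exprn_ge0.
have f1 : N * Q <= W := ler_wpM2r Q0 natf.
have f3 : 2 * W <= dd * W := ler_wpM2r W0 dd2.
have f4 : 2 * (dd * W) <= dd * (dd * W).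
  by apply: ler_wpM2r => //; apply: mulr_ge0 => //; lra.
have -> : 16 * N * Q + 64 * mm ^+ 2 * dd * N ^+ 2 * Q = 16 * (N * Q) + 64 * (dd * W).
  by rewrite /W; ring.
have -> : 24 ^+ 2 * mm ^+ 2 * dd ^+ 2 * N ^+ 2 * Q = 576 * (dd * (dd * W)).
  by rewrite /W; ring.
lra.
Qed.

Local Open Scope classical_set_scope.

Definition KR (R : realType) (I : Type) : I -> topologicalType :=
  fun _ => (R^o : topologicalType).

Lemma exists_min_box (R : realType) (I : finType)
  (F : prod_topology (KR R I) -> R^o) (M : R) : 0 <= M -> continuous F ->
  exists g : I -> R, (forall i, 0 <= g i <= M) /\
     forall h : I -> R, (forall i, 0 <= h i <= M) -> F g <= F h.
Proof.
move=> M0 cF.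
set A := [set f : prod_topology (KR R I) | forall i, `[0, M]%classic (f i)].
have cA : compact A.
  exact: (@tychonoff I (KR R I) (fun _ => `[0, M]%classic) (fun _ => @segment_compact R _ _)).
have A0 : A !=set0.
  exists (fun _ => 0) => i /=; by rewrite in_itv /= lexx.
have [g gA gmin] := @compact_EVT_min _ R F A A0 cA (continuous_subspaceT cF).
exists g; split.
  by move=> i; move: gA; rewrite inE => /(_ i) /=; rewrite in_itv.
move=> h hA; apply: gmin; rewrite inE => i /=; by rewrite in_itv hA.
Qed.


Lemma cont_sum (R : realType) (T : topologicalType) (I : Type) (r : seq I) (P : pred I) (f : I -> T -> R^o) :
  (forall i, continuous (f i)) -> continuous (fun x => \sum_(i <- r | P i) f i x).
Proof.
move=> cf; apply: continuous_big => [|i _]; last exact: cf.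
exact: add_continuous.
Qed.

Lemma cont_add (R : realType) (T : topologicalType) (f g : T -> R^o) : continuous f -> continuous g ->
  continuous (fun x => f x + g x).
Proof. move=> cf cg x; exact: (continuousD (cf x) (cg x)). Qed.

Lemma cont_mul (R : realType) (T : topologicalType) (f g : T -> R^o) : continuous f -> continuous g ->
  continuous (fun x => f x * g x).
Proof. move=> cf cg x; exact: (continuousM (cf x) (cg x)). Qed.

Lemma cont_cst (R : realType) (T : topologicalType) (a : R^o) : continuous (fun _ : T => a).
Proof. by move=> x; apply: cvg_cst. Qed.

Lemma cont_exp (R : realType) (T : topologicalType) (f : T -> R^o) : continuous f -> continuous (fun x => expR (f x) : R^o).
Proof.
move=> cf x; apply: (continuous_comp (cf x)); exact: continuous_expR.
Qed.

Lemma cont_ln (R : realType) (T : topologicalType) (f : T -> R^o) : continuous f -> (forall x, 0 < f x) ->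
  continuous (fun x => ln (f x) : R^o).
Proof.
move=> cf fp x; apply: (continuous_comp (cf x)); exact: continuous_ln.
Qed.

Local Close Scope classical_set_scope.

Lemma cont_opp (R : realType) (T : topologicalType) (f : T -> R^o) :
  continuous f -> continuous (fun x => - f x).
Proof. move=> cf x; exact: (continuousN (cf x)). Qed.

Lemma normalize (R : realType) (V E X : finType) (ep : E -> bool -> V)
  (Cv : V -> X -> R) (Ce : E -> X -> X -> R) (eta : R) (x0 : X)
  (lam : dualv R E X) : 0 < eta ->
  exists lam' : dualv R E X, [/\ (forall e b x, 0 <= lam' e b x),
    (forall e b, exists x, lam' e b x = 0) &
    Ldual ep eta Cv Ce lam' = Ldual ep eta Cv Ce lam].
Proof.
move=> eta0.
pose xm e b := Order.arg_min x0 xpredT (fun x => lam e b x).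
have hxm : forall e b x, lam e b (xm e b) <= lam e b x.
  move=> e b x; rewrite /xm.
  by case: (@Order.TotalTheory.arg_minP _ _ _ x0 xpredT (fun x => lam e b x) erefl) => i _ /(_ x isT).
exists (fun e b x => lam e b x - lam e b (xm e b)); split.
- by move=> e b x; rewrite subr_ge0.
- by move=> e b; exists (xm e b); rewrite subrr.
- exact: (Ldual_shift ep Cv Ce eta x0 lam (fun e b => lam e b (xm e b)) eta0).
Qed.

Lemma card_V_le (V E : finType) (ep : E -> bool -> V) :
  no_isolated ep -> (#|V| <= 2 * #|E|)%N.
Proof.
move=> noiso.
have sub : [set: V] \subset [set ep p.1 p.2 | p in [set: E * bool]].
  apply/fintype.subsetP => i _; have [e [b h]] := noiso i.
  by apply/imsetP; exists (e, b); rewrite ?inE.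
have := leq_trans (subset_leq_card sub) (leq_imset_card _ _).
by rewrite cardsT cardsT card_prod card_bool mulnC.
Qed.

Definition uncur (R : realType) (E X : finType) (g : E * bool * X -> R) :
  dualv R E X := fun e b x => g (e, b, x).
Arguments uncur {R E X} g.

Lemma Ldual_cont (R : realType) (V E X : finType) (ep : E -> bool -> V)
  (Cv : V -> X -> R) (Ce : E -> X -> X -> R) (eta : R) (x0 : X) :
  continuous (fun g : prod_topology (KR R (E * bool * X)) =>
     (Ldual ep eta Cv Ce (uncur g) : R^o)).
Proof.
have pc : forall p : E * bool * X,
    continuous (fun g : prod_topology (KR R (E * bool * X)) => (g p : R^o)).
  move=> p; exact: (@proj_continuous _ (KR R (E * bool * X)) p).
rewrite /Ldual /uncur.
apply: cont_add; apply: cont_mul; try exact: cont_cst.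
- apply: cont_sum => i; apply: cont_ln; last by move=> g; exact: (@sum_expR_gt0 _ _ _ x0).
  apply: cont_sum => x; apply: cont_exp; apply: cont_add.
    exact: cont_cst.
  apply: cont_mul; first exact: cont_cst.
  apply: cont_sum => e; apply: cont_sum => b; exact: pc.
- apply: cont_sum => e; apply: cont_ln; last first.
    move=> g; rewrite pair_bigA /=; exact: (@sum_expR_gt0 _ _ _ (x0, x0)).
  apply: cont_sum => x; apply: cont_sum => y; apply: cont_exp; apply: cont_add.
    exact: cont_cst.
  apply: cont_opp; apply: cont_mul; first exact: cont_cst.
  apply: cont_add; exact: pc.
Qed.

Arguments Cnorm_ge0 {R V E X} Cv Ce.
Arguments core {R V E X} ep Cv Ce eta x0 lam _ _ _ _.
Arguments normalize {R V E X} ep Cv Ce eta x0 lam _.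
Arguments exists_min_box {R I F M} _ _.
Arguments Ldual_cont {R V E X} ep Cv Ce eta x0.

Theorem lemma7 (R : realType) (V E X : finType) (ep : E -> bool -> V)
  (Cv : V -> X -> R) (Ce : E -> X -> X -> R) (eta : R) :
  simple_graph ep -> no_isolated ep -> (2 <= #|X|)%N -> 0 < eta ->
  let n := #|V| in let m := #|E| in let d := #|X| in
  let G := 24 * m%:R * d%:R * (m + n)%:R *
           (Num.sqrt eta * Cnorm_inf Cv Ce + ln d%:R / Num.sqrt eta) in
  exists lam : dualv R E X,
    (forall mu : dualv R E X, Ldual ep eta Cv Ce lam <= Ldual ep eta Cv Ce mu) /\
    4 * Ldual ep eta Cv Ce (@zero_dual R E X) - 4 * Ldual ep eta Cv Ce lam
      + 16 * (m%:R) ^+ 2 * eta * sqnorm2 lam <= G ^+ 2.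
Proof.
move=> _ noiso d2 eta0 n m d G.
have /card_gt0P[x0 _] : (0 < #|X|)%N by apply: leq_trans d2.
set c := Cnorm_inf Cv Ce.
set M := 2 * (#|V|%:R + #|E|%:R) * c + (#|V|%:R + 2 * #|E|%:R) * (ln (#|X|%:R : R) / eta).
have M0 : 0 <= M.
  have c0 : 0 <= c := Cnorm_ge0 Cv Ce.
  have l0 : 0 <= ln (#|X|%:R : R) by apply: ln_ge0; rewrite (ler_nat R 1); apply: leq_trans d2.
  rewrite /M; apply: addr_ge0; apply: mulr_ge0 => //; try apply: mulr_ge0 => //;
    try apply: addr_ge0 => //; try apply: mulr_ge0 => //; by rewrite invr_ge0 ltW.
have [g [gbox gmin]] := exists_min_box M0 (Ldual_cont ep Cv Ce eta x0).
set L := Ldual ep eta Cv Ce.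
have hg0 : L (uncur g) <= L (@zero_dual R E X).
  have h0 : forall i : E * bool * X, 0 <= (0 : R) <= M by move=> i; rewrite lexx M0.
  exact: (gmin (fun _ => 0) h0).
have [lam [lam0 z hlam]] := normalize ep Cv Ce eta x0 (uncur g) eta0.
have hL : L lam <= L (@zero_dual R E X) by rewrite /L hlam.
have [hle hsq hdiff] := core ep Cv Ce eta x0 _ eta0 lam0 z hL.
exists lam; split.
  move=> mu.
  have [mu' [mu0 zm hmu]] := normalize ep Cv Ce eta x0 mu eta0.
  case: (leP (L mu) (L (@zero_dual R E X))) => hmu0; last first.
    by rewrite /L hlam; apply: le_trans hg0 (ltW hmu0).
  have hmu' : L mu' <= L (@zero_dual R E X) by rewrite /L hmu.
  have [hle' _ _] := core ep Cv Ce eta x0 _ eta0 mu0 zm hmu'.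
  rewrite /L hlam -hmu.
  have hbox : forall p : E * bool * X, 0 <= mu' p.1.1 p.1.2 p.2 <= M.
    by move=> [[e b] x]; rewrite mu0 hle'.
  exact: (gmin _ hbox).
rewrite -mulrBr.
have nm := @card_V_le V E ep noiso.
exact: (@final_arith R n m d c eta _ _ nm d2 (Cnorm_ge0 Cv Ce) eta0 hdiff hsq).
Qed.
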